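(* Let $k>8$ be an integer, $\theta=2\pi/k$, $G=(V,E)$ a unit disk graph, $Y_k=(V,E_Y)$ its Yao graph and $YS_k=(V,E_{YS})$ the output of the Sink step applied to $Y_k$. Let $\overrightarrow{uv}\in E_Y$ and let $w_0=v,w_1,\dots,w_h=u$ be vertices, all lying in $K_v(u)$, such that for each $i=1,\dots,h$: $\overrightarrow{w_iw_{i-1}}\in E_{YS}$, $w_i\in K_{w_{i-1}}(u)$, and $\mathrm{ID}(\overrightarrow{w_iw_{i-1}})\le\mathrm{ID}(\overrightarrow{uw_{i-1}})$. Then there exists $\ell\le h$ such that $|vw_\ell|\ge |uv|/(2\cos\theta)$ and $\sum_{i=0}^{\ell-1}|w_iw_{i+1}|\le \frac{|vw_\ell|}{\cos 2\theta}$.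
   Context: Unit disk graph: $V$ a finite point set in the plane, $E=\{uv:|uv|\le1\}$ with $|uv|$ Euclidean distance. Cones: at each point $x$ the plane is partitioned into $k$ half-open half-closed cones with apex $x$ of angle $\theta$, bounded by $k$ equally spaced rays (same directions at every node); $K_x(y)$ is the cone with apex $x$ containing $y$; $K_x$ an arbitrary such cone. Identifiers: nodes have distinct IDs; $\mathrm{ID}(\overrightarrow{xy})=(|xy|,\mathrm{ID}(x),\mathrm{ID}(y))$ compared lexicographically; $\mathrm{ID}(xy)=\min\{\mathrm{ID}(\overrightarrow{xy}),\mathrm{ID}(\overrightarrow{yx})\}$. Yao step: for each node $x$ and each cone $K_x$ containing the other endpoint of some edge of $E$ incident to $x$, add to $E_Y$ the directed edge $\overrightarrow{xy}$ where $xy$ is such an edge with lowest $\mathrm{ID}(xy)$. Sink step on $(V,E_Y)$: set $E_{YS}=\emptyset$. For each node $v$ and each cone $K_v$: let $I$ be the set of $x$ with $\overrightarrow{xv}\in E_Y$, $x\in K_v$; set $I(v)\leftarrow I$, $J\leftarrow(v)$ (ordered sequence), $T(v)\leftarrow\emptyset$. Repeat until $I$ is empty: remove the first vertex $x$ from $J$; for each cone $K_x$, let $w\in I(x)\cap K_x$ minimize $\mathrm{ID}(\overrightarrow{wx})$ (if any), add $\overrightarrow{wx}$ to $T(v)$, move $w$ from $I$ to $J$, set $I(w)\leftarrow I(x)\cap K_x$. Then add the directed edges of $T(v)$ to $E_{YS}$. *)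

(* Defs.v *)
From HB Require Import structures.
From mathcomp Require Import all_boot all_order all_algebra.
From mathcomp Require Import boolp reals trigo.
Set Implicit Arguments. Unset Strict Implicit. Unset Printing Implicit Defensive.
Import Order.TTheory GRing.Theory Num.Theory.
Local Open Scope ring_scope.

Section UDG.
Context {R : realType} {T : finType}.
(* pt : positions of the nodes; id : their identifiers; k : number of cones;
   alpha : direction of the first cone-bounding ray (same at every node). *)
Variables (pt : T -> R * R) (id : T -> nat) (k : nat) (alpha : R).

Definition theta : R := 2 * pi / k%:R.

Definition dist (x y : T) : R :=
  Num.sqrt (((pt x).1 - (pt y).1) ^+ 2 + ((pt x).2 - (pt y).2) ^+ 2).

Definition udg_edge (x y : T) : bool := (x != y) && (dist x y <= 1).

Definition inCone (j : nat) (x y : T) : bool :=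
  `[< exists r phi : R, 0 < r /\
        alpha + j%:R * theta <= phi < alpha + j.+1%:R * theta /\
        (pt y).1 = (pt x).1 + r * cos phi /\ (pt y).2 = (pt x).2 + r * sin phi >].

Definition sameCone (x y z : T) : bool :=
  [exists j : 'I_k, inCone j x y && inCone j x z].

Definition IDd (x y : T) : R * nat * nat := (dist x y, id x, id y).

Definition lexle (a b : R * nat * nat) : bool :=
  (a.1.1 < b.1.1) ||
  ((a.1.1 == b.1.1) && ((a.1.2 < b.1.2)%N || ((a.1.2 == b.1.2) && (a.2 <= b.2)%N))).

Definition IDu (x y : T) : R * nat * nat :=
  if lexle (IDd x y) (IDd y x) then IDd x y else IDd y x.

Definition EY (x y : T) : bool :=
  udg_edge x y &&
  [forall z, (udg_edge x z && sameCone x y z) ==> lexle (IDu x y) (IDu x z)].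

(* Sink step.  State: (I, J, I(.), T(v)); a pair (w, x) in T(v) encodes the
   directed edge wx. *)
Definition sstate := ({set T} * seq T * (T -> {set T}) * {set T * T})%type.

Definition process_cone (x : T) (st : sstate) (j : 'I_k) : sstate :=
  let: (Is, J, Im, Tv) := st in
  let S := [set y in Im x | inCone j x y] in
  match [pick w in S | [forall y in S, lexle (IDd w x) (IDd y x)]] with
  | Some w => (Is :\ w, rcons J w, (fun z => if z == w then S else Im z), (w, x) |: Tv)
  | None => st
  end.

Definition sink_iter (st : sstate) : sstate :=
  let: (Is, J, Im, Tv) := st in
  match J with
  | [::] => st
  | x :: J' => foldl (process_cone x) (Is, J', Im, Tv) (enum 'I_k)
  end.

(* "repeat until I is empty" (#|T|.+1 iterations always suffice) *)
Fixpoint sink_loop (n : nat) (st : sstate) : sstate :=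
  if n is n'.+1 then
    let: (Is, _, _, _) := st in
    if Is == set0 then st else sink_loop n' (sink_iter st)
  else st.

Definition sink_tree (v : T) (j : 'I_k) : {set T * T} :=
  let I0 := [set x | EY x v & inCone j v x] in
  (sink_loop #|T|.+1 (I0, [:: v], (fun z => if z == v then I0 else set0), set0)).2.

Definition EYS (x y : T) : bool :=
  [exists v, exists j : 'I_k, (x, y) \in sink_tree v j].

End UDG.

(* Main.v *)
Require Import Defs.
From HB Require Import structures.
From mathcomp Require Import all_boot all_order all_algebra.
From mathcomp Require Import boolp reals trigo.
From mathcomp Require Import ring lra.
Import Order.TTheory GRing.Theory Num.Theory.
Local Open Scope ring_scope.

Lemma cross_bound {R : realType} (c sn nx ny x1 x2 y1 y2 : R) :
  0 <= c -> 0 <= sn -> c^+2 + sn^+2 = 1 -> 0 <= nx -> 0 <= ny ->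
  nx^+2 = x1^+2 + x2^+2 -> ny^+2 = y1^+2 + y2^+2 ->
  nx * ny * c <= x1 * y1 + x2 * y2 ->
  `|x1 * y2 - x2 * y1| <= nx * ny * sn.
Proof.
move=> c0 s0 cs nx0 ny0 hx hy hd.
have e : (x1 * y2 - x2 * y1)^+2 = nx^+2 * ny^+2 - (x1 * y1 + x2 * y2)^+2.
  by rewrite hx hy; ring.
have h1 : 0 <= nx * ny * c by rewrite !mulr_ge0.
have h2 : (nx * ny * c)^+2 <= (x1 * y1 + x2 * y2)^+2 by nra.
have h3 : (x1 * y2 - x2 * y1)^+2 <= (nx * ny * sn)^+2.
  rewrite e; have -> : (nx * ny * sn)^+2 = nx^+2 * ny^+2 * (1 - c^+2) by rewrite -cs; ring.
  nra.
have h4 : 0 <= nx * ny * sn by rewrite !mulr_ge0.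
rewrite ler_norml; apply/andP; split; nra.
Qed.

Lemma compose {R : realType} (c sn nx ny nz x1 x2 y1 y2 z1 z2 : R) :
  0 <= c -> 0 <= sn -> c^+2 + sn^+2 = 1 -> 0 <= nx -> 0 <= ny -> 0 <= nz ->
  nx^+2 = x1^+2 + x2^+2 -> ny^+2 = y1^+2 + y2^+2 -> nz^+2 = z1^+2 + z2^+2 ->
  nx * ny * c <= x1 * y1 + x2 * y2 ->
  ny * nz * c <= y1 * z1 + y2 * z2 ->
  nx * ny^+2 * nz * (c^+2 - sn^+2) <= (x1 * z1 + x2 * z2) * ny^+2.
Proof.
move=> c0 s0 cs nx0 ny0 nz0 hx hy hz d1 d2.
have b1 := cross_bound _ _ _ _ _ _ _ _ c0 s0 cs nx0 ny0 hx hy d1.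
have d2' : nz * ny * c <= z1 * y1 + z2 * y2 by lra.
have b2 := cross_bound _ _ _ _ _ _ _ _ c0 s0 cs nz0 ny0 hz hy d2'.
have e : (x1 * z1 + x2 * z2) * ny^+2 = (x1 * y1 + x2 * y2) * (y1 * z1 + y2 * z2)
   + (x1 * y2 - x2 * y1) * (z1 * y2 - z2 * y1) by rewrite hy; ring.
have p1 : (nx * ny * c) * (ny * nz * c) <= (x1 * y1 + x2 * y2) * (y1 * z1 + y2 * z2).
  apply: ler_pM => //; rewrite !mulr_ge0 //.
have p2 : - ((nx * ny * sn) * (nz * ny * sn)) <= (x1 * y2 - x2 * y1) * (z1 * y2 - z2 * y1).
  have n : `|(x1 * y2 - x2 * y1) * (z1 * y2 - z2 * y1)| <= (nx * ny * sn) * (nz * ny * sn).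
    by rewrite normrM; apply: ler_pM.
  by move: n; rewrite ler_norml => /andP[].
rewrite e; nra.
Qed.

Lemma sq_le {R : realType} (x y : R) : 0 <= y -> x^+2 <= y^+2 -> x <= y.
Proof. move=> y0 h; nra. Qed.

Lemma sq_mono {R : realType} (x y : R) : 0 <= x -> x <= y -> x^+2 <= y^+2.
Proof. move=> x0 h; nra. Qed.

Lemma tri {R : realType} (c sn L rho nq a1 a2 p1 p2 : R) :
  0 <= c -> 0 <= sn -> c^+2 + sn^+2 = 1 -> sn <= c -> 0 < L -> 0 <= rho -> 0 <= nq ->
  L^+2 = a1^+2 + a2^+2 -> rho^+2 = p1^+2 + p2^+2 -> nq^+2 = (a1 - p1)^+2 + (a2 - p2)^+2 ->
  rho * L * c <= p1 * a1 + p2 * a2 -> 2 * c * rho <= L ->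
  nq * L * c <= (a1 - p1) * a1 + (a2 - p2) * a2.
Proof.
move=> c0 s0 cs sc L0 r0 q0 hL hr hq hD hr2.
have Y := cross_bound _ _ _ _ _ _ _ _ c0 s0 cs r0 (ltW L0) hr hL hD.
set D := p1 * a1 + p2 * a2 in hD *.
set X := p1 * a2 - p2 * a1 in Y.
set M := rho * L in hD Y.
have DX : D^+2 + X^+2 = M^+2 by rewrite /D /X /M exprMn hr hL; ring.
have c12 : 1/2 <= c by nra.
have M0 : 0 <= M by rewrite /M mulr_ge0 // ltW.
have DM : D <= M by nra.
have XX : `|X|^+2 = X^+2 by rewrite real_normK // num_real.
have X0 : 0 <= `|X| by [].
have key : c * `|X| <= sn * (2 * M * c - D).
  have M2 : M <= 2 * M * c.
    have h := mulr_ge0 M0 (_ : 0 <= 2 * c - 1); have := h ltac:(lra); nra.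
  apply: sq_le; first by rewrite mulr_ge0 // subr_ge0; lra.
  have hint : 0 <= (D - M * c) * (D - M * c * (3 * sn^+2 - c^+2)).
    apply: mulr_ge0; first lra.
    have : M * c * (3 * sn^+2 - c^+2) <= M * c by apply: ler_piMr; [rewrite mulr_ge0| nra].
    have : M * c <= D by [].

    lra.
  have s2 : sn^+2 = 1 - c^+2 by lra.
  have E : (sn * (2 * M * c - D))^+2 - c^+2 * (M^+2 - D^+2) =
      (D - M * c) * (D - M * c * (3 * sn^+2 - c^+2)) by rewrite exprMn s2; ring.
  have X2 : X^+2 = M^+2 - D^+2 by lra.
  rewrite exprMn XX X2; lra.
have ML : 2 * M * c <= L^+2 by rewrite /M; nra.
have LD : 0 <= L^+2 - D by nra.
have e : (nq * L)^+2 = (L^+2 - D)^+2 + X^+2.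
  by rewrite exprMn hq hL /D /X; ring.
have -> : (a1 - p1) * a1 + (a2 - p2) * a2 = L^+2 - D by rewrite hL /D; ring.
apply: sq_le => //.
have k2 : (c * `|X|)^+2 <= (sn * (L^+2 - D))^+2.
  apply: sq_mono; [by rewrite mulr_ge0 | nra].
rewrite exprMn e; move: k2; rewrite !exprMn XX; nra.
Qed.

Lemma step {R : realType} (c sn L rho nq ns a1 a2 p1 p2 s1 s2 : R) :
  0 <= c -> 0 <= sn -> c^+2 + sn^+2 = 1 -> sn <= c -> 0 < L -> 0 <= rho -> 0 < nq -> 0 <= ns ->
  L^+2 = a1^+2 + a2^+2 -> rho^+2 = p1^+2 + p2^+2 -> nq^+2 = (a1 - p1)^+2 + (a2 - p2)^+2 ->
  ns^+2 = s1^+2 + s2^+2 ->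
  rho * L * c <= p1 * a1 + p2 * a2 -> 2 * c * rho <= L ->
  ns * nq * c <= s1 * (a1 - p1) + s2 * (a2 - p2) ->
  ns * L * (c^+2 - sn^+2) <= s1 * a1 + s2 * a2.
Proof.
move=> c0 s0 cs sc L0 r0 q0 n0 hL hr hq hs hD hr2 hS.
have T := tri _ _ _ _ _ _ _ _ _ c0 s0 cs sc L0 r0 (ltW q0) hL hr hq hD hr2.
have C := compose _ _ _ _ _ _ _ _ _ _ _ c0 s0 cs n0 (ltW q0) (ltW L0) hs hq hL hS T.
have q2 : 0 < nq^+2 by rewrite exprn_gt0.
rewrite -(ler_pM2r q2); move: C; congr (_ <= _); ring.
Qed.

Section G.
Context {R : realType} {T : finType} (pt : T -> R * R) (k : nat) (alpha : R).

Lemma dist_sq (x y : T) : dist pt x y ^+2 = ((pt y).1 - (pt x).1)^+2 + ((pt y).2 - (pt x).2)^+2.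
Proof.
rewrite /dist sqr_sqrtr ?addr_ge0 ?sqr_ge0 //.
by rewrite -!(sqrrN ((pt y).1 - _)) -(sqrrN ((pt y).2 - _)) !opprB.
Qed.

Lemma dist_ge0 (x y : T) : 0 <= dist pt x y.
Proof. exact: sqrtr_ge0. Qed.

Lemma dist_sym (x y : T) : dist pt x y = dist pt y x.
Proof.
have e : dist pt x y ^+2 = dist pt y x ^+2 by rewrite !dist_sq; ring.
by apply/le_anti/andP; split; apply: sq_le; rewrite ?dist_ge0 ?e.
Qed.

Lemma cos_close (t : R) : (theta k : R) <= pi -> `|t| < theta k -> cos (theta k) <= cos t.
Proof.
move=> tp ht; rewrite -(cos_norm t); apply: ltW.
have h0 : 0 <= (theta k : R) by apply: le_trans (ltW ht); exact: normr_ge0.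
rewrite (ltr_cos (x:=`|t|) (y:=theta k)) // !in_itv /= ?normr_ge0 ?h0 ?tp //.
by rewrite (ltW (lt_le_trans ht tp)).
Qed.

Lemma sq_eq (a b : R) : 0 <= a -> 0 <= b -> a^+2 = b^+2 -> a = b.
Proof. by move=> a0 b0 e; apply/le_anti/andP; split; apply: sq_le; rewrite ?e. Qed.

Lemma inCone_rep j x y : inCone pt k alpha j x y -> exists r phi : R, 0 < r /\
  alpha + j%:R * theta k <= phi < alpha + j%:R * theta k + theta k /\ (pt y).1 - (pt x).1 = r * cos phi /\ (pt y).2 - (pt x).2 = r * sin phi.
Proof.
move/asboolP => [r [phi [r0 [hp [e1 e2]]]]]; exists r, phi; split => //.
split; last by rewrite e1 e2; split; ring.
by move: hp; rewrite -addn1 natrD mulrDl mul1r addrA.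
Qed.

Lemma cone_dot x y z : (theta k : R) <= pi -> sameCone pt k alpha x y z ->
  0 < dist pt x y /\ 0 < dist pt x z /\ dist pt x y * dist pt x z * cos (theta k) <=
  ((pt y).1 - (pt x).1) * ((pt z).1 - (pt x).1) + ((pt y).2 - (pt x).2) * ((pt z).2 - (pt x).2).
Proof.
move=> tp /existsP [j /andP [/inCone_rep [r1 [f1 [r10 [h1 [e1 e2]]]]]
                            /inCone_rep [r2 [f2 [r20 [h2 [e3 e4]]]]]]].
have d1 : dist pt x y = r1.
  apply: sq_eq; rewrite ?dist_ge0 ?ltW // dist_sq e1 e2.
  by rewrite !exprMn -mulrDr cos2Dsin2 mulr1.
have d2 : dist pt x z = r2.
  apply: sq_eq; rewrite ?dist_ge0 ?ltW // dist_sq e3 e4.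
  by rewrite !exprMn -mulrDr cos2Dsin2 mulr1.
rewrite d1 d2 e1 e2 e3 e4; split => //; split => //.
have hc : cos (theta k) <= cos (f1 - f2).
  apply: cos_close => //; rewrite ltr_norml; apply/andP; split.
  - by case/andP: h1 => ? ?; case/andP: h2 => ? ?; lra.
  - by case/andP: h1 => ? ?; case/andP: h2 => ? ?; lra.
have -> : r1 * cos f1 * (r2 * cos f2) + r1 * sin f1 * (r2 * sin f2) = r1 * r2 * cos (f1 - f2).
  by rewrite cosB; ring.
by rewrite ler_pM2l // mulr_gt0.
Qed.
End G.

Lemma trig_facts {R : realType} (k : nat) : (8 < k)%N ->
  let c := cos (theta k : R) in let sn := sin (theta k : R) in
  (theta k : R) <= pi /\ 0 < c /\ 0 <= sn /\ c^+2 + sn^+2 = 1 /\ sn <= c /\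
  cos (2 * theta k : R) = c^+2 - sn^+2 /\ 0 < c^+2 - sn^+2.
Proof.
move=> hk c sn.
have K9 : 9 <= k%:R :> R by rewrite (ler_nat R 9 k).
have K0 : 0 < k%:R :> R by lra.
have tK : (theta k : R) * k%:R = 2 * pi by rewrite /theta mulfVK // gt_eqF.
have p0 := @pi_gt0 R.
have t0 : 0 < (theta k : R) by nra.
have t9 : (theta k : R) * 9 <= 2 * pi by nra.
have tp : (theta k : R) <= pi by lra.
have c0 : 0 < c by apply: cos_gt0_pihalf; apply/andP; split; lra.
have s0 : 0 <= sn by apply: sin_ge0_pi; apply/andP; split; lra.
have cs : c^+2 + sn^+2 = 1 by exact: cos2Dsin2.
have c2 : cos (2 * theta k : R) = c^+2 - sn^+2.
  have -> : (2 * theta k : R) = theta k *+ 2 by rewrite mulr2n; lra.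
  by rewrite cos_mulr2n -/c mulr2n; lra.
have c2p : 0 < cos (2 * theta k : R) by apply: cos_gt0_pihalf; apply/andP; split; lra.
have sc : sn <= c by nra.
by rewrite -c2.
Qed.

Lemma telesc {R : realType} (f : nat -> R) (l : nat) :
  \sum_(i < l) (f i.+1 - f i) = f l - f 0%N.
Proof.
elim: l => [|l IH]; first by rewrite big_ord0 subrr.
by rewrite big_ord_recr /= IH; ring.
Qed.

Lemma le_eqs {R : realType} (a b c d : R) : a = b -> c = d -> b <= d -> a <= c.
Proof. by move=> -> ->. Qed.

Theorem lemma3 (R : realType) (T : finType) (pt : T -> R * R) (id : T -> nat)
    (k : nat) (alpha : R)
    (pt_inj : injective pt) (id_inj : injective id) (hk : (8 < k)%N)
    (u v : T) (huv : EY pt id k alpha u v)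
    (h : nat) (w : nat -> T) (hw0 : w 0%N = v) (hwh : w h = u)
    (hcone : forall i, (1 <= i <= h)%N -> sameCone pt k alpha v u (w i))
    (hsink : forall i, (1 <= i <= h)%N -> EYS pt id k alpha (w i) (w i.-1))
    (hcone' : forall i, (1 <= i <= h)%N -> sameCone pt k alpha (w i.-1) u (w i))
    (hid : forall i, (1 <= i <= h)%N ->
       lexle (IDd pt id (w i) (w i.-1)) (IDd pt id u (w i.-1))) :
  exists l : nat, (l <= h)%N /\
    dist pt u v / (2 * cos (theta k)) <= dist pt v (w l) /\
    \sum_(i < l) dist pt (w i) (w i.+1) <= dist pt v (w l) / cos (2 * theta k).
Proof.
have [tp [c0 [s0 [cs [sc [c2 c2p]]]]]] := @trig_facts R k hk.
set c := cos (theta k : R) in c0 s0 cs sc c2 c2p *.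
set sn := sin (theta k : R) in s0 cs sc c2 c2p.
set L := dist pt u v.
have L0 : 0 <= L by exact: dist_ge0.
have c12 : 1 <= 2 * c by nra.
have c2c : 0 < 2 * c by lra.
pose P := fun l => (L / (2 * c) <= dist pt v (w l)).
have Ph : P h. rewrite /P hwh dist_sym -/L.
  rewrite ler_pdivrMr //.
  nra.
have exP : exists n, P n by exists h.
case: (ex_minnP exP) => l Pl minl.
exists l; split; first exact: minl h Ph.
split; first exact: Pl.
rewrite c2.
have lh : (l <= h)%N := minl h Ph.
have notP : forall i, (i < l)%N -> dist pt v (w i) < L / (2 * c).
  move=> i il; rewrite ltNge; apply/negP => Pi.
  by have := minl i Pi; rewrite leqNgt il.
have dvv : dist pt v v = 0.
  by apply: sq_eq; rewrite ?dist_ge0 // dist_sq !subrr expr0n /= addr0.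
have C0 := c2p.
case: (posnP l) => [->|lp].
  by rewrite big_ord0 divr_ge0 ?dist_ge0 ?ltW.
have Lp : 0 < L.
  have := notP 0%N lp; rewrite hw0 dvv => h0.
  by move: h0; rewrite ltr_pdivlMr // mul0r.
have Lvu : L = dist pt v u by rewrite dist_sym.
pose f := fun i => (pt (w i)).1 * ((pt u).1 - (pt v).1) + (pt (w i)).2 * ((pt u).2 - (pt v).2).
have stp : forall i : 'I_l,
    dist pt (w i) (w i.+1) * (L * (c^+2 - sn^+2)) <= f i.+1 - f i.
  move=> [i il] /=.
  have il1 : (0 < i.+1 <= h)%N by rewrite /= (leq_trans il lh).
  have [nq0 [_ hS]] := cone_dot pt k alpha (w i) u (w i.+1) tp (hcone' i.+1 il1).
  have hL : L^+2 = ((pt u).1 - (pt v).1)^+2 + ((pt u).2 - (pt v).2)^+2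
    by rewrite Lvu dist_sq.
  have hr : dist pt v (w i) ^+2 = ((pt (w i)).1 - (pt v).1)^+2 + ((pt (w i)).2 - (pt v).2)^+2
    by rewrite dist_sq.
  have hq : dist pt (w i) u ^+2 = (((pt u).1 - (pt v).1) - ((pt (w i)).1 - (pt v).1))^+2
      + (((pt u).2 - (pt v).2) - ((pt (w i)).2 - (pt v).2))^+2
    by rewrite dist_sq; ring.
  have hs : dist pt (w i) (w i.+1) ^+2 = ((pt (w i.+1)).1 - (pt (w i)).1)^+2
      + ((pt (w i.+1)).2 - (pt (w i)).2)^+2 by rewrite dist_sq.
  have hD : dist pt v (w i) * L * c <=
      ((pt (w i)).1 - (pt v).1) * ((pt u).1 - (pt v).1) + ((pt (w i)).2 - (pt v).2) * ((pt u).2 - (pt v).2).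
    case: (posnP i) => [i0|ip].
      by rewrite i0 hw0 dvv !subrr; lra.
    have i1 : (0 < i <= h)%N by rewrite ip /= ltnW // (leq_trans il lh).
    have [_ [_ hc]] := cone_dot pt k alpha v u (w i) tp (hcone i i1).
    by move: hc; rewrite Lvu (mulrC (dist pt v (w i))) (mulrC ((pt (w i)).1 - _)) (mulrC ((pt (w i)).2 - _)).
  have hr2 : 2 * c * dist pt v (w i) <= L.
    have := notP i il; rewrite ltr_pdivlMr //; lra.
  have hS' : dist pt (w i) (w i.+1) * dist pt (w i) u * c <=
      ((pt (w i.+1)).1 - (pt (w i)).1) * (((pt u).1 - (pt v).1) - ((pt (w i)).1 - (pt v).1))
    + ((pt (w i.+1)).2 - (pt (w i)).2) * (((pt u).2 - (pt v).2) - ((pt (w i)).2 - (pt v).2)).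
    apply: (le_eqs _ _ _ _ _ _ hS); first by rewrite (mulrC (dist pt (w i) (w i.+1))).
    ring.
  have S := step _ _ _ _ _ _ _ _ _ _ _ _ (ltW c0) s0 cs sc Lp (dist_ge0 _ _ _) nq0 (dist_ge0 _ _ _)
     hL hr hq hs hD hr2 hS'.
  rewrite /f; lra.
have sumle : (\sum_(i < l) dist pt (w i) (w i.+1)) * (L * (c^+2 - sn^+2)) <= f l - f 0%N.
  rewrite -telesc mulr_suml; apply: ler_sum => i _; exact: stp.
have CS : f l - f 0%N <= dist pt v (w l) * L.
  have hr : dist pt v (w l) ^+2 = ((pt (w l)).1 - (pt v).1)^+2 + ((pt (w l)).2 - (pt v).2)^+2
    by rewrite dist_sq.
  have hL : L^+2 = ((pt u).1 - (pt v).1)^+2 + ((pt u).2 - (pt v).2)^+2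
    by rewrite Lvu dist_sq.
  apply: sq_le; first by rewrite mulr_ge0 ?dist_ge0.
  rewrite /f hw0 exprMn hr hL.
  set x1 := (pt (w l)).1; set x2 := (pt (w l)).2; set v1 := (pt v).1; set v2 := (pt v).2.
  set a1 := (pt u).1 - v1; set a2 := (pt u).2 - v2.
  have -> : (x1 * a1 + x2 * a2 - (v1 * a1 + v2 * a2)) ^+ 2 =
     ((x1 - v1) ^+ 2 + (x2 - v2) ^+ 2) * (a1 ^+ 2 + a2 ^+ 2) - ((x1 - v1) * a2 - (x2 - v2) * a1)^+2
    by ring.
  by rewrite lerBlDr lerDl sqr_ge0.
have LC : 0 < L * (c^+2 - sn^+2) by rewrite mulr_gt0.
rewrite ler_pdivlMr //.
rewrite -(ler_pM2r Lp).
have := le_trans sumle CS.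
by congr (_ <= _); ring.
Qed.
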